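(* Let $(N,C,\mathbf{A},k)$ be an instance with $|N|=n$ having at least one cohesive group, and let $c_{\max}$ be its maximum EJR degree. For every $\lambda\in[0,\frac{n}{k^2})$ satisfying $n>k(k+1)(c_{\max}-1)+\lambda k^2$, every committee output by $\lambda$-LS-PAV (from any initial committee) has EJR degree $c_{\max}$.
   Context: An instance consists of voters $N=\{1,\dots,n\}$, candidates $C$, approval ballots $A_i\subseteq C$ for $i\in N$, and a committee size $k$ with $1\le k\le|C|$. For $\ell\in\mathbb{N}$, $N'\subseteq N$ is an $\ell$-cohesive group if $|N'|\ge\ell n/k$ and $|\bigcap_{i\in N'}A_i|\ge\ell$ (a cohesive group is a $1$-cohesive group). A size-$k$ committee $W$ achieves EJR degree $c$ if for every $\ell\in\{1,\dots,k\}$ every $\ell$-cohesive group contains at least $c$ voters $i$ with $|A_i\cap W|\ge\ell$; its EJR degree is the largest such $c$, and the maximum EJR degree of the instance is the maximum over all size-$k$ committees. The PAV-score of $W$ is $s_{\mathrm{PAV}}(W)=\sum_{i=1}^n\sum_{j=1}^{|A_i\cap W|}\frac1j$, and $\Delta(W,c^+,c^-)=s_{\mathrm{PAV}}((W\setminus\{c^-\})\cup\{c^+\})-s_{\mathrm{PAV}}(W)$. The algorithm $\lambda$-LS-PAV starts from an arbitrary size-$k$ committee $W$ and, while there exist $c^+\notin W$ and $c^-\in W$ with $\Delta(W,c^+,c^-)\ge\lambda$, replaces $W$ by $(W\setminus\{c^-\})\cup\{c^+\}$; it then outputs $W$. *)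

(* Defs.v *)
From mathcomp Require Import all_boot all_order all_algebra.
Set Implicit Arguments. Unset Strict Implicit. Unset Printing Implicit Defensive.
Import Order.TTheory GRing.Theory Num.Theory.

Section Defs.
Variables (n : nat) (C : finType) (A : 'I_n -> {set C}) (k : nat).

(* N' is an l-cohesive group: |N'| >= l n / k  (cleared of the denominator,
   k >= 1) and |/\_{i in N'} A_i| >= l. *)
Definition cohesive_group (l : nat) (N' : {set 'I_n}) : bool :=
  (l * n <= #|N'| * k)%N && (l <= #|\bigcap_(i in N') A i|)%N.

Definition achieves_ejr_degree (W : {set C}) (c : nat) : bool :=
  [forall l : 'I_k.+1, forall N' : {set 'I_n},
    ((1 <= l)%N && cohesive_group l N') ==>
    (c <= #|[set i in N' | l <= #|A i :&: W|]|)%N].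

(* EJR degree of W: the largest c achieved. When a cohesive group exists,
   every achieved c is <= n, so the largest is the max over c <= n. *)
Definition ejr_degree (W : {set C}) : nat :=
  \max_(c < n.+1 | achieves_ejr_degree W c) (c : nat).

Definition max_ejr_degree : nat :=
  \max_(W : {set C} | #|W| == k) ejr_degree W.

Variable R : realFieldType.
Local Open Scope ring_scope.

Definition pav_score (W : {set C}) : R :=
  \sum_(i < n) \sum_(j < #|A i :&: W|) (j.+1)%:R^-1.

Definition swap (W : {set C}) (cp cm : C) : {set C} := cp |: (W :\ cm).

Definition pav_delta (W : {set C}) (cp cm : C) : R :=
  pav_score (swap W cp cm) - pav_score W.

Definition ls_step (lam : R) (W W' : {set C}) : Prop :=
  exists cp cm, [/\ cp \notin W, cm \in W, lam <= pav_delta W cp cm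
                  & W' = swap W cp cm].

Inductive ls_reach (lam : R) : {set C} -> {set C} -> Prop :=
| ls_refl W : ls_reach lam W W
| ls_next W1 W2 W3 : ls_step lam W1 W2 -> ls_reach lam W2 W3 -> ls_reach lam W1 W3.

Definition ls_pav_output (lam : R) (W : {set C}) : Prop :=
  (exists W0 : {set C}, #|W0| = k /\ ls_reach lam W0 W) /\
  ~ (exists W', ls_step lam W W').

End Defs.

(* Main.v *)
Require Import Defs.
From mathcomp Require Import all_boot all_order all_algebra.
From mathcomp Require Import ring lra.
Import Order.TTheory GRing.Theory Num.Theory.
Local Open Scope ring_scope.
Set Implicit Arguments. Unset Strict Implicit.

Definition H (R : realFieldType) (m : nat) : R := \sum_(j < m) (j.+1)%:R^-1.

Lemma HS (R : realFieldType) m : H R m.+1 = H R m + (m.+1)%:R^-1.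
Proof. by rewrite /H big_ord_recr. Qed.

Lemma sum_ind (R : realFieldType) (T : finType) (W S : {set T}) :
  \sum_(x in W) ((x \in S)%:R : R) = #|W :&: S|%:R.
Proof.
rewrite -sum1_card natr_sum [RHS]big_mkcond [LHS]big_mkcond /=.
by apply: eq_bigr => x _; rewrite inE; case: (x \in W); case: (x \in S).
Qed.

Lemma card_swap (C : finType) (B W : {set C}) cp cm :
  cp \notin W -> cm \in W ->
  (#|B :&: swap W cp cm| + (cm \in B) = #|B :&: W| + (cp \in B))%N.
Proof.
move=> cpW cmW; rewrite /swap setIUr setIDA cardsU.
have -> : (B :&: [set cp]) :&: ((B :&: W) :\ cm) = set0.
  apply/setP=> x; rewrite !inE; apply/negbTE; apply/negP.
  by case: (x =P cp) => [->|]; rewrite ?(negbTE cpW) ?andbF ?andbT.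
rewrite cards0 subn0 (cardsD1 cm (B :&: W)) inE cmW andbT.
have -> : #|B :&: [set cp]| = (cp \in B).
  case: (boolP (cp \in B)) => h.
    by rewrite (setIidPr _) ?cards1 // sub1set.
  rewrite (_ : _ :&: _ = set0) ?cards0 //; apply/setP=> x; rewrite !inE.
  by apply/negbTE; apply/andP=> [[xB /eqP xe]]; move: h; rewrite -xe xB.
by case: (cm \in B); case: (cp \in B); rewrite /= ?add0n ?add1n ?addSn ?addnS.
Qed.

Lemma delta_voter (R : realFieldType) (C : finType) (B W : {set C}) cp cm :
  cp \notin W -> cm \in W ->
  H R #|B :&: swap W cp cm| - H R #|B :&: W| =
  ((cp \in B) && (cm \notin B))%:R / (#|B :&: W|.+1)%:R
  - ((cp \notin B) && (cm \in B))%:R / (#|B :&: W|)%:R.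
Proof.
move=> cpW cmW; have := @card_swap _ B W cp cm cpW cmW.
set u' := #|B :&: swap W cp cm|; set u := #|B :&: W|.
case: (cp \in B); case: (cm \in B) => /=.
- by rewrite !addn1 => -[->]; rewrite subrr !mul0r subrr.
- by rewrite addn0 addn1 => ->; rewrite HS mul1r mul0r subr0 addrC addKr.
- by rewrite addn0 addn1 => <-; rewrite HS mul1r mul0r sub0r opprD addrA subrr add0r.
- by rewrite !addn0 => ->; rewrite subrr !mul0r subrr.
Qed.

Lemma voter_bound (R : realFieldType) (C : finType) (B W : {set C}) cp k :
  cp \notin W -> #|W| = k ->
  (cp \in B)%:R * (k.+1)%:R / (#|B :&: W|.+1)%:R - 1 <=
  \sum_(cm in W) (H R #|B :&: swap W cp cm| - H R #|B :&: W|).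
Proof.
move=> cpW Wk.
rewrite (eq_bigr (fun cm => ((cp \in B) && (cm \notin B))%:R / (#|B :&: W|.+1)%:R
  - ((cp \notin B) && (cm \in B))%:R / (#|B :&: W|)%:R)); last first.
  by move=> cm cmW; rewrite delta_voter.
rewrite sumrB -!mulr_suml.
have hID := cardsID B W; rewrite Wk (setIC W B) in hID.
case: (cp \in B) => /=.
- rewrite (eq_bigr (fun cm => (cm \in ~: B)%:R)); last by move=> cm _; rewrite inE.
  rewrite sum_ind big1 ?mul0r ?subr0 //; rewrite setDE in hID.
  have hk : (#|W :&: ~: B| = k - #|B :&: W|)%N by rewrite -hID addKn.
  rewrite hk natrB; last by rewrite -hID leq_addr.
  rewrite mul1r; set u := #|B :&: W|.
  have hu : (u.+1)%:R != 0 :> R by rewrite pnatr_eq0.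
  rewrite le_eqVlt; apply/orP; left; apply/eqP.
  rewrite -addn1 natrD; field.
  by rewrite -(natrD _ 1 u) add1n.
- rewrite !mulr0n mul0r mul0r big1 // sum_ind (setIC W B) mul0r sub0r sub0r lerN2.
  set u := #|B :&: W|; have [->|hu] := eqVneq u 0%N; first by rewrite mul0r ler01.
  by rewrite divff ?pnatr_eq0.
Qed.
Lemma arith1 (R : realFieldType) (kk nn P c L lam : R) :
  1 <= kk -> 1 <= L -> 0 <= nn -> 0 <= lam -> L * nn <= P * kk -> P <= c - 1 ->
  kk * (kk + 1) * (c - 1) + lam * kk ^+ 2 < nn -> False.
Proof.
move=> hk hL hn hl hLP hP hlt.
have h1 : nn <= P * kk by nra.
have h2 : P * kk <= (c - 1) * kk by nra.
have h3 : 0 <= c - 1 by nra.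
nra.
Qed.

Lemma arith2 (R : realFieldType) (kk nn P q c L lam D S : R) :
  1 <= kk -> 1 <= L -> 0 <= q -> q <= c - 1 -> L * nn <= P * kk ->
  D <= kk * lam -> S - nn <= D -> (kk + 1) / L * (P - q) <= S -> 0 <= lam ->
  kk * (kk + 1) * (c - 1) + lam * kk ^+ 2 < nn -> False.
Proof.
move=> hk hL hq hqc hLP hD hDS hS hl hlt.
have hL0 : 0 < L by lra.
set X := L^-1.
have hX : X * L = 1 by rewrite mulVf // gt_eqF.
have hX0 : 0 < X by rewrite invr_gt0.
have hX1 : X <= 1 by rewrite invr_le1 // ?unitf_gt0.
have e1 : (kk + 1) / L * (P - q) = (kk + 1) * X * (P - q) by [].
rewrite e1 in hS.
have := ler_wpM2l (ltW hX0) hLP; rewrite mulrA hX mul1r => h0.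
have h1 : kk * X * P >= nn by lra.
have hkq : 0 <= kk * q by apply: mulr_ge0 => //; lra.
have := ler_wpM2l hkq hX1; rewrite mulr1 => h2'.
have h3 : (kk + 1) * X * (P - q) <= kk * lam + nn by lra.
have hk0 : 0 <= kk by lra.
have := ler_wpM2l hk0 h3 => h4.
have h5 : kk * ((kk + 1) * X * (P - q)) = (kk+1) * (kk * X * P) - (kk + 1) * (kk * q * X) by ring.
rewrite h5 in h4.
have hk1 : 0 <= kk + 1 by lra.
have h6 := ler_wpM2l hk1 h1.
have h7 := ler_wpM2l hk1 h2'.
have hkk : 0 <= kk * (kk + 1) by apply: mulr_ge0.
have h8 := ler_wpM2l hkk hqc.
nra.
Qed.

Lemma reach_card (R : realFieldType) n (C : finType) (A : 'I_n -> {set C}) (lam : R) k W0 W :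
  ls_reach A lam W0 W -> #|W0| = k -> #|W| = k.
Proof.
elim=> // W1 W2 W3 [cp [cm [cpW cmW _ ->]]] _ IH h1; apply: IH.
rewrite /swap cardsU1 !inE (negbTE cpW) andbF /=.
by rewrite (cardsD1 cm W1) cmW in h1; rewrite -h1.
Qed.

Lemma card_sum (R : realFieldType) n (S : {set 'I_n}) :
  \sum_i ((i \in S)%:R : R) = #|S|%:R.
Proof.
rewrite -sum1_card natr_sum [RHS]big_mkcond /=.
by apply: eq_bigr => x _; case: (x \in S).
Qed.

Lemma sum_delta (R : realFieldType) n (C : finType) (A : 'I_n -> {set C}) k (W : {set C}) cp :
  cp \notin W -> #|W| = k ->
  \sum_i (cp \in A i)%:R * (k.+1)%:R / (#|A i :&: W|.+1)%:R - n%:R <=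
  \sum_(cm in W) pav_delta A R W cp cm.
Proof.
move=> cpW Wk.
rewrite /pav_delta /pav_score.
rewrite (eq_bigr (fun cm => \sum_i (H R #|A i :&: swap W cp cm| - H R #|A i :&: W|)));
  last by move=> cm _; rewrite sumrB.
rewrite exchange_big /=.
have -> : (n%:R : R) = \sum_(i < n) 1 by rewrite sumr_const card_ord.
rewrite -sumrB; apply: ler_sum => i _; exact: voter_bound.
Qed.

Unset Implicit Arguments.

Theorem proposition5 (R : realFieldType) (n : nat) (C : finType)
  (A : 'I_n -> {set C}) (k : nat)
  (hk : (1 <= k <= #|C|)%N)
  (hcoh : exists N' : {set 'I_n}, cohesive_group A k 1 N')
  (lam : R)
  (hlam0 : 0 <= lam) (hlam1 : lam < n%:R / (k ^ 2)%:R)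
  (hn : (k * k.+1)%:R * ((max_ejr_degree A k)%:R - 1) + lam * (k ^ 2)%:R < n%:R)
  (W : {set C}) (hW : ls_pav_output A k lam W) :
  ejr_degree A k W = max_ejr_degree A k.
Proof.
move: hW => [[W0 [hW0 hr]] hstop].
have Wk : #|W| = k := @reach_card R n C A lam k W0 W hr hW0.
set cmax := max_ejr_degree A k in hn *.
have hk1 : (1 <= k)%N by case/andP: hk.
have hnR : (k%:R * (k%:R + 1) * (cmax%:R - 1) + lam * k%:R ^+ 2 < n%:R :> R).
  by move: hn; rewrite natrM natrX -addn1 natrD.
have cmn : (cmax < n.+1)%N.
  apply/bigmax_leqP => W' _; apply/bigmax_leqP => c _; by rewrite -ltnS.
apply/eqP; rewrite eqn_leq; apply/andP; split.
  by apply: (leq_bigmax_cond (F := ejr_degree A k) W); rewrite Wk.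
rewrite /ejr_degree.
apply: (leq_bigmax_cond (F := fun c : 'I_n.+1 => (c : nat)) (Ordinal cmn)).
apply/forallP => l; apply/forallP => N'; apply/implyP => /andP [hl1 /andP [hcoh1 hcoh2]].
rewrite leqNgt; apply/negP => hlt.
set cnt := #|_| in hlt.
have hk1R : (1 <= k%:R :> R) by rewrite ler1n.
have hl1R : (1 <= (l : nat)%:R :> R) by rewrite ler1n.
have hLP : ((l : nat)%:R * n%:R <= #|N'|%:R * k%:R :> R) by rewrite -!natrM ler_nat.
have cpos : (0 < cmax)%N by apply: leq_ltn_trans hlt.
have hc1 : ((cmax - 1)%N%:R = cmax%:R - 1 :> R) by rewrite natrB.
have hN' : (cmax <= #|N'|)%N.
  rewrite leqNgt; apply/negP => hP.
  apply: (arith1 hk1R hl1R (ler0n R n) hlam0 hLP _ hnR).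
  by rewrite -hc1 ler_nat subn1 -ltnS prednK.
have [i hiN hiu] : exists2 i, i \in N' & ~~ ((l : nat) <= #|A i :&: W|)%N.
  apply/exists_inP; rewrite -negb_forall_in; apply/negP => /forall_inP hall.
  have e : [set x in N' | ((l : nat) <= #|A x :&: W|)%N] = N'.
    by apply/setP => x; rewrite inE; case: (boolP (x \in N')) => //= /hall.
  by move: hlt; rewrite /cnt e /= ltnNge hN'.
have [cp hcpI hcpW] : exists2 cp, cp \in \bigcap_(j in N') A j & cp \notin W.
  apply/exists_inP; rewrite -negb_forall_in; apply/negP => /forall_inP hall.
  move: hiu; rewrite (leq_trans hcoh2) //; apply: subset_leq_card.
  apply/subsetP => x hx; rewrite inE hall // andbT.
  by move: hx => /bigcapP; apply.
have hD : \sum_(cm in W) pav_delta A R W cp cm <= k%:R * lam.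
  rewrite -[k]Wk mulr_natl -sumr_const; apply: ler_sum => cm cmW.
  rewrite leNgt; apply/negP => hlt'; apply: hstop; exists (swap W cp cm).
  by exists cp, cm; split => //; apply: ltW.
have hDS := @sum_delta R n C A k W cp hcpW Wk.
set S := \sum_i _ in hDS.
have hS : (k%:R + 1) / (l : nat)%:R * (#|N'|%:R - cnt%:R) <= S.
  rewrite -!card_sum -sumrB mulr_sumr; apply: ler_sum => j _.
  rewrite inE; case: (boolP (j \in N')) => hj /=.
    have -> : cp \in A j by move: hcpI => /bigcapP; apply.
    case: (boolP ((l : nat) <= #|A j :&: W|)%N) => hu /=.
      by rewrite subrr mulr0 mul1r divr_ge0 // ler0n.
    rewrite subr0 mulr1 mul1r (_ : (k.+1)%:R = k%:R + 1); last by rewrite -addn1 natrD.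
    apply: ler_wpM2l; first by apply: addr_ge0; rewrite ?ler0n ?ler01.
    rewrite lef_pV2 ?posrE ?ltr0n // ler_nat; by rewrite ltnNge.
  rewrite !mulr0n subrr mulr0; apply: divr_ge0; rewrite ?ler0n // mulr_ge0 // ler0n.
apply: (arith2 hk1R hl1R (ler0n R cnt) _ hLP hD hDS hS hlam0 hnR).
by rewrite -hc1 ler_nat subn1 -ltnS prednK.
Qed.
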